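(* Let $V$ be a vector space of countably infinite dimension over a field $\mathbb{F}$ and $u$ an endomorphism of $V$. Assume that $V^u=V_1\oplus V_2$ (direct sum of submodules), where $V_1$ is a non-zero free monogenous $\mathbb{F}[t]$-module and $u$ induces a scalar multiple of the identity on $V_2$. Let $x$ be a generator of $V_1$ and $a\in\mathbb{F}$. Then there exists an endomorphism $v$ of $V$ such that $v^2=av$ and, setting $u':=u-v$, one has $V=\operatorname{Span}\bigl((u')^k(x)\bigr)_{k\in\mathbb{N}}$.
   Context: $V^u$ is the $\mathbb{F}[t]$-module with underlying space $V$ and $t\cdot x:=u(x)$; a module is monogenous if it is generated by one element. *)

(* Defs.v *)
From HB Require Import structures.
From mathcomp Require Import all_boot all_order all_algebra.
Set Implicit Arguments. Unset Strict Implicit. Unset Printing Implicit Defensive.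
Import GRing.Theory.
Local Open Scope ring_scope.

Section Defs.
Variables (F : fieldType) (V : lmodType F).

Definition span_fam (f : nat -> V) : V -> Prop :=
  fun y => exists (n : nat) (c : 'I_n -> F), y = \sum_(i < n) c i *: f i.

Definition free_fam (f : nat -> V) : Prop :=
  forall (n : nat) (c : 'I_n -> F),
    \sum_(i < n) c i *: f i = 0 -> forall i, c i = 0.

Definition countably_infinite_dim : Prop :=
  exists e : nat -> V, free_fam e /\ forall y, span_fam e y.

Definition polyact (u : V -> V) (p : {poly F}) (y : V) : V :=
  \sum_(i < size p) p`_i *: iter i u y.

Definition submodule_u (u : V -> V) (W : V -> Prop) : Prop :=
  [/\ W 0, (forall y z, W y -> W z -> W (y + z)),
      (forall (c : F) y, W y -> W (c *: y)) & (forall y, W y -> W (u y))].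

Definition generated_by (u : V -> V) (W : V -> Prop) (x : V) : Prop :=
  forall y, W y <-> exists p : {poly F}, y = polyact u p x.

Definition free_monogenous_nonzero (u : V -> V) (W : V -> Prop) : Prop :=
  exists y : V, generated_by u W y /\
    (forall p : {poly F}, polyact u p y = 0 -> p = 0).

Definition direct_sum_u (u : V -> V) (W1 W2 : V -> Prop) : Prop :=
  [/\ submodule_u u W1, submodule_u u W2,
      (forall y, exists y1 y2, [/\ W1 y1, W2 y2 & y = y1 + y2]) &
      (forall y, W1 y -> W2 y -> y = 0)].

End Defs.

(* Main.v *)
Require Import Defs.
From HB Require Import structures.
From mathcomp Require Import all_boot all_order all_algebra.
From Stdlib Require Import ClassicalEpsilon.
Import GRing.Theory.
Local Open Scope ring_scope.

Lemma polyactE (F : fieldType) (V : lmodType F) (u : {linear V -> V}) (p : {poly F}) (y : V) n :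
  (size p <= n)%N -> polyact u p y = \sum_(i < n) p`_i *: iter i u y.
Proof.
move=> le; rewrite /polyact (big_ord_widen n (fun i => p`_i *: iter i u y) le).
rewrite big_mkcond /=; apply: eq_bigr => i _; case: ifP => // /negbT.
by rewrite -leqNgt => h; rewrite nth_default // scale0r.
Qed.

Lemma iter_lin0 (F : fieldType) (V : lmodType F) (u : {linear V -> V}) i :
  iter i u 0 = 0.
Proof. by elim: i => //= i ->; rewrite linear0. Qed.

Lemma polyact0 (F : fieldType) (V : lmodType F) (u : {linear V -> V}) (y : V) :
  polyact u 0 y = 0.
Proof. by rewrite /polyact size_poly0 big_ord0. Qed.

Lemma polyact_y0 (F : fieldType) (V : lmodType F) (u : {linear V -> V}) (p : {poly F}) :
  polyact u p 0 = 0.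
Proof. by rewrite /polyact big1 // => i _; rewrite iter_lin0 scaler0. Qed.

Lemma polyactD (F : fieldType) (V : lmodType F) (u : {linear V -> V}) (p q : {poly F}) (y : V) :
  polyact u (p + q) y = polyact u p y + polyact u q y.
Proof.
set n := maxn (size p) (size q).
rewrite !(polyactE _ _ _ _ _ n) ?leq_maxl ?leq_maxr ?size_polyD //.
by rewrite -big_split; apply: eq_bigr => i _; rewrite coefD scalerDl.
Qed.

Lemma polyactZ (F : fieldType) (V : lmodType F) (u : {linear V -> V}) c (p : {poly F}) (y : V) :
  polyact u (c *: p) y = c *: polyact u p y.
Proof.
rewrite !(polyactE _ _ _ _ _ (size p)) ?size_scale_leq //.
by rewrite scaler_sumr; apply: eq_bigr => i _; rewrite coefZ scalerA.
Qed.

Lemma polyactC (F : fieldType) (V : lmodType F) (u : {linear V -> V}) (c : F) (y : V) :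
  polyact u c%:P y = c *: y.
Proof.
by rewrite (polyactE _ _ _ _ _ 1) ?size_polyC_leq1 // big_ord1 coefC.
Qed.

Lemma polyactMX (F : fieldType) (V : lmodType F) (u : {linear V -> V}) (p : {poly F}) (y : V) :
  polyact u (p * 'X) y = u (polyact u p y).
Proof.
have [->|pn0] := eqVneq p 0; first by rewrite mul0r !polyact0 linear0.
rewrite (polyactE _ _ _ _ _ (size p).+1) ?size_mulX // big_ord_recl coefMX eqxx scale0r add0r.
rewrite (polyactE _ _ _ _ _ (size p)) // linear_sum; apply: eq_bigr => i _.
by rewrite coefMX /= linearZ.
Qed.

Lemma polyactM (F : fieldType) (V : lmodType F) (u : {linear V -> V}) (p q : {poly F}) (y : V) :
  polyact u (p * q) y = polyact u p (polyact u q y).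
Proof.
elim/poly_ind: p => [|p c IH]; first by rewrite mul0r !polyact0.
rewrite mulrDl mulrAC polyactD polyactMX IH mul_polyC polyactZ.
by rewrite polyactD polyactMX polyactC.
Qed.
Definition pad {F : fieldType} (c : nat -> F) (n : nat) : nat -> F :=
  fun i => if (i < n)%N then c i else 0.

Lemma pad1 (F : fieldType) (V : lmodType F) (A : nat -> V) (c : nat -> F) (n N : nat) :
  (n <= N)%N -> \sum_(i < n) c i *: A i = \sum_(i < N) pad c n i *: A i.
Proof.
move=> le; rewrite (big_ord_widen N (fun i => c i *: A i) le) big_mkcond /=.
by apply: eq_bigr => i _; rewrite /pad; case: ifP => _ //; rewrite scale0r.
Qed.

Lemma pad2 (F : fieldType) (V : lmodType F) (A B : nat -> V) (c d : nat -> F) (n N : nat) :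
  (n <= N)%N -> \sum_(i < n) (c i *: A i + d i *: B i) =
     \sum_(i < N) (pad c n i *: A i + pad d n i *: B i).
Proof.
by move=> le; rewrite !big_split /= (pad1 _ _ A c _ _ le) (pad1 _ _ B d _ _ le).
Qed.

Lemma lincomb (F : fieldType) (V : lmodType F) (A B : nat -> V) (a : F) (c d c' d' : nat -> F) (N : nat) :
  \sum_(i < N) ((a * c i + c' i) *: A i + (a * d i + d' i) *: B i) =
  a *: \sum_(i < N) (c i *: A i + d i *: B i) + \sum_(i < N) (c' i *: A i + d' i *: B i).
Proof.
rewrite scaler_sumr -big_split; apply: eq_bigr => i _ /=.
by rewrite !scalerDl scalerDr !scalerA addrACA.
Qed.

Lemma delta1 (F : fieldType) (V : lmodType F) (A B : nat -> V) (i : nat) :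
  \sum_(j < i.+1) (((j:nat) == i)%:R *: A j + (0:F) *: B j) = A i.
Proof.
rewrite big_ord_recr /= eqxx scale1r scale0r addr0 big1 ?add0r // => j _.
by rewrite (ltn_eqF (ltn_ord j)) !scale0r addr0.
Qed.

Lemma delta2 (F : fieldType) (V : lmodType F) (A B : nat -> V) (i : nat) :
  \sum_(j < i.+1) ((0:F) *: A j + ((j:nat) == i)%:R *: B j) = B i.
Proof.
rewrite big_ord_recr /= eqxx scale1r scale0r add0r big1 ?add0r // => j _.
by rewrite (ltn_eqF (ltn_ord j)) !scale0r addr0.
Qed.

Lemma build_lin (F : fieldType) (V : lmodType F) (e f W1 W2 : nat -> V) :
  (forall n (c : nat -> F), \sum_(i < n) c i *: e i = 0 -> forall i, (i < n)%N -> c i = 0) ->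
  (forall n (d : nat -> F), \sum_(i < n) d i *: f i = 0 -> forall i, (i < n)%N -> d i *: f i = 0) ->
  (forall i, f i = 0 -> W2 i = 0) ->
  (forall y, exists t : nat * (nat -> F) * (nat -> F),
       y = \sum_(i < t.1.1) (t.1.2 i *: e i + t.2 i *: f i)) ->
  (forall n (c d : nat -> F), \sum_(i < n) c i *: e i = \sum_(i < n) d i *: f i ->
       \sum_(i < n) c i *: e i = 0) ->
  exists v : {linear V -> V}, (forall i, v (e i) = W1 i) /\ (forall i, v (f i) = W2 i).
Proof.
move=> efree ffree W2z span dir.
have uniq N (c d c' d' : nat -> F) : \sum_(i < N) (c i *: e i + d i *: f i) =
     \sum_(i < N) (c' i *: e i + d' i *: f i) ->
     \sum_(i < N) (c i *: W1 i + d i *: W2 i) = \sum_(i < N) (c' i *: W1 i + d' i *: W2 i).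
  move=> H.
  have H2 : \sum_(i < N) (c i - c' i) *: e i = \sum_(i < N) (d' i - d i) *: f i.
    under eq_bigr do rewrite scalerBl.
    under [RHS]eq_bigr do rewrite scalerBl.
    rewrite !sumrB; move: H; rewrite !big_split /= => H.
    apply/eqP; rewrite subr_eq addrAC eq_sym subr_eq eq_sym H addrC //.
  have H3 := dir N (fun i => c i - c' i) (fun i => d' i - d i) H2.
  have Hc := efree N (fun i => c i - c' i) H3.
  rewrite H3 in H2; have Hd := ffree N (fun i => d' i - d i) (esym H2).
  apply: eq_bigr => i _.
  have -> : c i = c' i by apply/eqP; rewrite -subr_eq0; apply/eqP/Hc.
  congr (_ + _); have := Hd _ (ltn_ord i); move/eqP; rewrite scaler_eq0.
  case/orP => [/eqP/eqP|/eqP/W2z ->]; last by rewrite !scaler0.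
  by rewrite subr_eq0 => /eqP ->.
pose Lf y := let t := proj1_sig (constructive_indefinite_description _ (span y)) in
   \sum_(i < t.1.1) (t.1.2 i *: W1 i + t.2 i *: W2 i).
have LfE n (c d : nat -> F) y : y = \sum_(i < n) (c i *: e i + d i *: f i) ->
    Lf y = \sum_(i < n) (c i *: W1 i + d i *: W2 i).
  move=> Hy; rewrite /Lf; case: (constructive_indefinite_description _ _) => [[[m c'] d']] /= Hm.
  rewrite (pad2 _ _ _ _ _ _ _ _ (leq_maxl m n)) (pad2 _ _ _ _ _ _ _ _ (leq_maxr m n)).
  by apply: uniq; rewrite -!pad2 ?leq_maxl ?leq_maxr // -Hm.
have lin : linear Lf.
  move=> a y z.
  case: (span y) => [[[n c] d]] /= Hy; case: (span z) => [[[m c'] d']] /= Hz.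
  set N := maxn n m.
  rewrite (pad2 _ _ _ _ _ _ _ _ (leq_maxl n m)) in Hy.
  rewrite (pad2 _ _ _ _ _ _ _ _ (leq_maxr n m)) in Hz.
  rewrite (LfE _ _ _ _ Hy) (LfE _ _ _ _ Hz).
  rewrite -lincomb; apply: (LfE N (fun i => a * pad c n i + pad c' m i) (fun i => a * pad d n i + pad d' m i)).
  by rewrite lincomb -Hy -Hz.
pose v : {linear V -> V} := HB.pack Lf (GRing.isLinear.Build _ _ _ _ Lf lin).
exists v; split => i.
  by rewrite /= (LfE i.+1 (fun j => (j == i)%:R) (fun _ => 0)) ?delta1.
by rewrite /= (LfE i.+1 (fun _ => 0) (fun j => (j == i)%:R)) ?delta2.
Qed.

Lemma span_nat (F : fieldType) (V : lmodType F) (g : nat -> V) y :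
  span_fam g y <-> exists n (c : nat -> F), y = \sum_(i < n) c i *: g i.
Proof.
split.
  case=> [[|n]] [c ->]; first by exists 0%N, (fun _ => 0); rewrite !big_ord0.
  exists n.+1, (fun i => c (inord i)); apply: eq_bigr => i _; by rewrite inord_val.
by case=> n [c ->]; exists n, (fun i : 'I_n => c i).
Qed.

Lemma closed_sum (F : fieldType) (V : lmodType F) (W : V -> Prop) :
  W 0 -> (forall y z, W y -> W z -> W (y + z)) ->
  forall n (G : nat -> V), (forall i, (i < n)%N -> W (G i)) -> W (\sum_(i < n) G i).
Proof.
move=> W0 WD; elim=> [|n IH] G HG; first by rewrite big_ord0.
rewrite big_ord_recr /=; apply: WD; last exact: HG.
by apply: IH => i lt; apply: HG; apply: ltnW.
Qed.

Lemma alg1 (V : zmodType) (A e1 f : V) : e1 - (A + e1 + f) + A = - f.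
Proof. by rewrite !opprD !addrA [e1 - A]addrC addrK addrAC addNr add0r. Qed.
Lemma alg2 (V : zmodType) (L A e1 f : V) : L - (L - (A + e1 + f)) - A - f = e1.
Proof. by rewrite opprB addrA [L + _]addrC addrK addrAC addrK [A + e1]addrC addrK. Qed.

Theorem lemma9 (F : fieldType) (V : lmodType F) (u : {linear V -> V})
    (V1 V2 : V -> Prop) (x : V) (a : F) :
  countably_infinite_dim V ->
  direct_sum_u u V1 V2 ->
  free_monogenous_nonzero u V1 ->
  (exists lam : F, forall y, V2 y -> u y = lam *: y) ->
  generated_by u V1 x ->
  exists v : {linear V -> V},
    (forall y, v (v y) = a *: v y) /\
    (forall y, span_fam (fun k => iter k (fun z => u z - v z) x) y).
Proof.
move=> [E [_ Espan]] [sub1 sub2 dec inter] [y0 [gen0 free0]] [lam Hlam] genx.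
case: sub1 => V10 V1D V1Z V1u.
case: sub2 => V20 V2D V2Z V2u.
have pa1 z : polyact u 1 z = z by rewrite -polyC1 polyactC scale1r.
have V1x : V1 x by apply/genx; exists 1; rewrite pa1.
have V1y0 : V1 y0 by apply/gen0; exists 1; rewrite pa1.
have xfree : forall p, polyact u p x = 0 -> p = 0.
  case/gen0: V1x => p0 Hx; case/genx: V1y0 => q0 Hy.
  move=> p Hp.
  have : polyact u (p * p0) y0 = 0 by rewrite polyactM -Hx.
  move/free0/eqP; rewrite mulf_eq0 => /orP [/eqP //|/eqP p00].
  have x0 : x = 0 by rewrite Hx p00 polyact0.
  have : polyact u 1 y0 = 0 by rewrite pa1 Hy x0 polyact_y0.
  by move/free0/eqP; rewrite oner_eq0.
pose e i := iter i u x.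
have eV1 i : V1 (e i) by elim: i => [|i IH] //=; apply: V1u.
have Vsum1 n (c : nat -> F) : V1 (\sum_(i < n) c i *: e i).
  by apply: (closed_sum _ _ V1 V10 V1D n (fun i => c i *: e i)) => i _; apply: V1Z.
have Vsum2 n (c : nat -> F) (g : nat -> V) : (forall i, V2 (g i)) -> V2 (\sum_(i < n) c i *: g i).
  by move=> Hg; apply: (closed_sum _ _ V2 V20 V2D n (fun i => c i *: g i)) => i _; apply: V2Z.
have epoly n (c : nat -> F) : polyact u (\poly_(i < n) c i) x = \sum_(i < n) c i *: e i.
  rewrite (polyactE _ _ _ _ _ n) ?size_poly //; apply: eq_bigr => i _.
  by rewrite coef_poly ltn_ord.
have efree n (c : nat -> F) : \sum_(i < n) c i *: e i = 0 -> forall i, (i < n)%N -> c i = 0.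
  rewrite -epoly => H i lt.
  by have := congr1 (fun p : {poly F} => p`_i) (xfree _ H); rewrite /= coef_poly lt coef0.
have bex k : exists b, V2 b /\ V1 (E k - b).
  by case: (dec (E k)) => y1 [y2 [H1 H2 ->]]; exists y2; split => //; rewrite addrK.
pose b k := proj1_sig (constructive_indefinite_description _ (bex k)).
have bV2 k : V2 (b k).
  by rewrite /b; case: (constructive_indefinite_description _ _) => ? [].
have bV1 k : V1 (E k - b k).
  by rewrite /b; case: (constructive_indefinite_description _ _) => ? [].
have bspan y : V2 y -> exists n (c : nat -> F), y = \sum_(i < n) c i *: b i.
  move=> Hy; case/span_nat: (Espan y) => n [c Hc]; exists n, c.
  set s := \sum_(i < n) c i *: b i.
  have Hs1 : V1 (y - s).
    rewrite Hc /s -sumrB; apply: (closed_sum _ _ V1 V10 V1D n (fun i => c i *: E i - c i *: b i)) => i _.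
    rewrite -scalerBr; apply: V1Z.
    exact: bV1.
  have Hs2 : V2 (y - s).
    by apply: V2D => //; rewrite -scaleN1r; apply: V2Z; apply: Vsum2.
  by apply/eqP; rewrite -subr_eq0; apply/eqP; apply: inter.
pose inspan k := exists c : nat -> F, b k = \sum_(i < k) c i *: b i.
pose f k := if excluded_middle_informative (inspan k) then 0 else b k.
have fV2 k : V2 (f k).
  by rewrite /f; case: (excluded_middle_informative (inspan k)) => ?; [exact: V20|exact: bV2].
have F1' n (d : nat -> F) : exists c : nat -> F, \sum_(i < n) d i *: f i = \sum_(i < n) c i *: b i.
  exists (fun i => if excluded_middle_informative (inspan i) then 0 else d i).
  apply: eq_bigr => i _; rewrite /f.
  by case: (excluded_middle_informative (inspan i)) => ?; rewrite ?scaler0 ?scale0r.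
have F1 k (c : nat -> F) : exists d : nat -> F, \sum_(i < k) c i *: b i = \sum_(i < k) d i *: f i.
  elim: k c => [|k IH] c; first by exists c; rewrite !big_ord0.
  rewrite big_ord_recr /=.
  case Hk: (excluded_middle_informative (inspan k)) => [[be Hbe]|Hn].
  - have [d Hd] := IH (fun i => c i + c k * be i).
    exists d; rewrite big_ord_recr /= /f Hk scaler0 addr0 -Hd Hbe scaler_sumr -big_split /=.
    by apply: eq_bigr => i _; rewrite scalerDl scalerA.
  - have [d Hd] := IH c; exists (fun i => if i == k then c k else d i).
    rewrite big_ord_recr /= eqxx /f Hk Hd; congr (_ + _); apply: eq_bigr => i _.
    by rewrite (ltn_eqF (ltn_ord i)).
have F2 n (d : nat -> F) : \sum_(i < n) d i *: f i = 0 -> forall i, (i < n)%N -> d i *: f i = 0.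
  elim: n => [|n IH] H i lt; first by [].
  move: H; rewrite big_ord_recr /= => H.
  have fn0 : d n *: f n = 0.
    have [->|dn] := eqVneq (d n) 0; first by rewrite scale0r.
    move: H; rewrite /f; case Hk: (excluded_middle_informative (inspan n)) => [?|Hn] H.
      by rewrite scaler0.
    exfalso; apply: (Hn).
    clear Hk.
    have [c Hc] := F1' n (fun i => - (d n)^-1 * d i).
    exists c; rewrite -Hc.
    under eq_bigr do rewrite -scalerA.
    rewrite -scaler_sumr.
    have -> : \sum_(i < n) d i *: f i = - (d n *: b n).
      by apply/eqP; rewrite -subr_eq0 opprK; apply/eqP.
    by rewrite scalerN scaleNr opprK scalerA mulVf // scale1r.
  rewrite fn0 addr0 in H.
  move: lt; rewrite ltnS leq_eqVlt => /orP [/eqP -> //|lt]; exact: IH.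
have rep y : exists t : nat * (nat -> F) * (nat -> F),
    y = \sum_(i < t.1.1) (t.1.2 i *: e i + t.2 i *: f i).
  case: (dec y) => y1 [y2 [H1 H2 ->]].
  case/genx: H1 => p ->; case: (bspan _ H2) => m [c ->]; case: (F1 m c) => d ->.
  exists (maxn (size p) m, pad (fun i => p`_i) (size p), pad d m) => /=.
  rewrite big_split /= -(pad1 _ _ _ _ _ _ (leq_maxr _ _)) -(pad1 _ _ _ _ _ _ (leq_maxl _ _)).
  by [].
have dir n (c d : nat -> F) : \sum_(i < n) c i *: e i = \sum_(i < n) d i *: f i ->
    \sum_(i < n) c i *: e i = 0.
  move=> H; apply: inter; first exact: Vsum1.
  by rewrite H; apply: Vsum2 => i; exact: fV2.
pose ck k := (a - 1) *: e k.*2 + e k.*2.+1 + f k.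
pose W1 i := if odd i then 0 else if f i./2 == 0 then 0 else ck i./2.
pose W2 i := if f i == 0 then 0 else ck i.
have W2z i : f i = 0 -> W2 i = 0 by move=> Hi; rewrite /W2 Hi eqxx.
have [v [ve vf]] := build_lin _ _ e f W1 W2 efree F2 W2z rep dir.
have W1e k : W1 k.*2 = if f k == 0 then 0 else ck k by rewrite /W1 odd_double doubleK.
have W1o k : W1 k.*2.+1 = 0 by rewrite /W1 /= odd_double.
exists v; split.
  have vck k : f k != 0 -> v (ck k) = a *: ck k.
    move=> fk.
    have -> : v (ck k) = (a - 1) *: v (e k.*2) + v (e k.*2.+1) + v (f k).
      by rewrite /ck !linearD linearZ.
    by rewrite !ve vf W1e W1o /W2 (negbTE fk) addr0 scalerBl scale1r subrK.
  have vv_e i : v (v (e i)) = a *: v (e i).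
    rewrite ve /W1; case: ifP => _; first by rewrite linear0 scaler0.
    case: ifP => [_|/negbT fk]; first by rewrite linear0 scaler0.
    exact: vck.
  have vv_f i : v (v (f i)) = a *: v (f i).
    rewrite vf /W2; case: ifP => [_|/negbT fk]; first by rewrite linear0 scaler0.
    exact: vck.
  move=> y; case: (rep y) => [[[n c] d]] /= ->.
  rewrite !linear_sum; apply: eq_bigr => i _.
  by rewrite !linearD !linearZ /= vv_e vv_f.
set g := fun k => iter k (fun z => u z - v z) x.
pose S := span_fam g.
have S0 : S 0 by apply/span_nat; exists 0%N, (fun _ => 0); rewrite big_ord0.
have SD y z : S y -> S z -> S (y + z).
  case/span_nat => n [c ->]; case/span_nat => m [c' ->]; apply/span_nat.
  exists (maxn n m), (fun i => pad c n i + pad c' m i).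
  rewrite (pad1 _ _ _ _ _ _ (leq_maxl n m)) (pad1 _ _ _ _ _ _ (leq_maxr n m)) -big_split.
  by apply: eq_bigr => i _; rewrite scalerDl.
have SZ (k : F) y : S y -> S (k *: y).
  case/span_nat => n [c ->]; apply/span_nat; exists n, (fun i => k * c i).
  by rewrite scaler_sumr; apply: eq_bigr => i _; rewrite scalerA.
have SB y z : S y -> S z -> S (y - z).
  by move=> Hy Hz; apply: SD => //; rewrite -scaleN1r; apply: SZ.
have Su y : S y -> S (u y - v y).
  case/span_nat => n [c ->]; apply/span_nat.
  exists n.+1, (fun i => if i is j.+1 then c j else 0).
  rewrite big_ord_recl /= scale0r add0r !linear_sum -big_split; apply: eq_bigr => i _ /=.
  by rewrite add0n !linearZ scalerBr -scalerN.
have ue n : u (e n) = e n.+1 by [].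
have Se0 : S (e 0%N).
  by apply/span_nat; exists 1%N, (fun _ => 1); rewrite big_ord1 scale1r.
have step1 k : S (e k.*2) -> S (f k) /\ S (e k.*2.+1).
  move=> H; have Hu := Su _ H; rewrite ue ve W1e in Hu.
  case: eqP Hu => [fk0|fk] Hu; first by rewrite fk0 subr0 in Hu *.
  have Hf : S (f k).
    have := SD _ _ Hu (SZ (a - 1) _ H); rewrite /ck alg1 => Hn.
    by rewrite -[f k]opprK -scaleN1r; apply: SZ.
  split => //.
  have Hu2 := Su _ Hf; rewrite vf /W2 (introF eqP fk) (Hlam _ (fV2 k)) in Hu2.
  have := SB _ _ (SB _ _ (SB _ _ (SZ lam _ Hf) Hu2) (SZ (a - 1) _ H)) Hf.
  by rewrite /ck alg2.
have step2 k : S (e k.*2.+1) -> S (e k.+1.*2).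
  by move=> H; have := Su _ H; rewrite ue ve W1o subr0 doubleS.
have key k : S (e k.*2) /\ S (e k.*2.+1) /\ S (f k).
  elim: k => [|k [_ [IH _]]].
    by have [? ?] := step1 0%N Se0; split.
  have H := step2 _ IH; have [? ?] := step1 _ H; by split.
have Se i : S (e i).
  rewrite -(odd_double_half i); case: (odd i); rewrite ?add1n ?add0n; by case: (key i./2) => [? []].
move=> y; case: (rep y) => [[[n c] d]] /= ->.
apply: (closed_sum _ _ S S0 SD n (fun i => c i *: e i + d i *: f i)) => i _.
apply: SD; apply: SZ => //; by case: (key i) => [_ []].
Qed.
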